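(* Assume $d\ge3$ and $d'=1$, write the unique row of $V$ as $v=(v_1,\dots,v_d)$, and fix $j\in[t]$. For parameters $W$, let $T=(T_{k_1k_2k_3})_{k_1,k_2,k_3\in[d]}$ be the symmetric tensor with $T_{k_1k_2k_3}=y_j(\{k_1,k_2,k_3\})$ evaluated at $\mu(W)$, and let $f_T(x)=\sum_{k_1,k_2,k_3\in[d]}T_{k_1k_2k_3}x_{k_1}x_{k_2}x_{k_3}$. Let $N=(T_{k,k,k_3})_{k,k_3\in[d]}\in\mathbb R^{d\times d}$. Then: (1) $\operatorname{rank}(N)\le 2\operatorname{rank}(A)+1$; in particular, if $2\operatorname{rank}(A)+1<d$ then all $(2\operatorname{rank}(A)+2)$-minors of $N$ vanish. (2) $f_T(x)=(x^\top Ax)(v^\top x)$, so $f_T$ is a product of a linear form and a quadratic form (if $f_T\neq0$, $[f_T]$ lies on the Chow variety of split type $(2,1)$ in $\mathbb P(S^3)$). Consequently $M_{\mathrm{Lie}}(f_T)$ has rank $<d^2-1$, and every maximal $(d^2-1)\times(d^2-1)$ minor of $M_{\mathrm{Lie}}$, regarded as a polynomial in the coordinates $y_j(\mathcal K)$ via the coefficients of $f_T$, vanishes on the attention variety.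
   Context: Setup: $Q,K\in\mathbb R^{a\times d}$, $V\in\mathbb R^{1\times d}$, $A=K^\top Q$, $\varphi_W(X)=VX(X^\top AX)$ for $X=(x_{kn})\in\mathbb R^{d\times t}$. For $\mathcal K\in\operatorname{Mult}_3([d])$ (size-3 multisets on $[d]$), $c_j(\mathcal K)$ is the coefficient of $\prod_{u\in\mathcal K}x_{uj}$ in $\varphi_W(X)[1,j]$ and $y_j(\mathcal K)=c_j(\mathcal K)/|\operatorname{Perm}(\mathcal K)|$, where $\operatorname{Perm}(\mathcal K)$ is the set of distinct orderings of $\mathcal K$. The map $\mu$ sends $W$ to all such scaled coefficients (and the analogous scaled cross-column coefficients); the attention variety is the Zariski closure of $\operatorname{im}\mu$. $S^3$ is the space of cubic forms in $x_1,\dots,x_d$. The Lie algebra flattening matrix $M_{\mathrm{Lie}}(f)$ of a cubic $f$ is the $\binom{d+2}{3}\times(d^2-1)$ matrix, in the monomial basis of $S^3$ and the basis $\{E_{uv}\ (u\ne v),\ H_u=E_{uu}-E_{dd}\ (u<d)\}$ of $\mathfrak{sl}_d$ (with $E_{uv}=x_u\partial/\partial x_v$), of the linear map $\mathfrak{sl}_d\to S^3$, $D\mapsto D(f)$, where $(m_{uv})$ acts as $\sum m_{uv}x_u\partial/\partial x_v$. The Chow variety of split type $(2,1)$ is the image of $\mathbb P(S^1)\times\mathbb P(S^2)\to\mathbb P(S^3)$, $([\ell],[q])\mapsto[\ell q]$. *)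

(* Defs.v *)
From HB Require Import structures.
From mathcomp Require Import all_boot all_order all_algebra.
From mathcomp Require Import mpoly.
Set Implicit Arguments. Unset Strict Implicit. Unset Printing Implicit Defensive.
Import Order.TTheory GRing.Theory Num.Theory.
Local Open Scope ring_scope.

Section Attention.
Variable R : realFieldType.

Definition xvar (d t : nat) (k : 'I_d) (n : 'I_t) : {mpoly R[d * t]} :=
  'X_(mxvec_index k n).

Definition Xmat (d t : nat) : 'M[{mpoly R[d * t]}]_(d, t) :=
  \matrix_(k < d, n < t) xvar k n.

Definition Amat (a d : nat) (Q K : 'M[R]_(a, d)) : 'M[R]_d := K^T *m Q.

Definition phiW (a d t : nat) (Q K : 'M[R]_(a, d)) (V : 'M[R]_(1, d))
  : 'M[{mpoly R[d * t]}]_(1, t) :=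
  let Ap := map_mx (fun c => c%:MP) (Amat Q K) in
  let Vp := map_mx (fun c => c%:MP) V in
  Vp *m Xmat d t *m ((Xmat d t)^T *m Ap *m Xmat d t).

(* A multiset on [d] is represented by any list of its elements;
   the monomial prod_{u in K} x_{uj} as an exponent vector *)
Definition monoK (d t : nat) (j : 'I_t) (Ks : seq 'I_d) : 'X_{1..d * t} :=
  (\big[+%MM/0%MM]_(u <- Ks) U_(mxvec_index u j))%MM.

(* |Perm(K)| = number of distinct orderings of K *)
Definition nPerm (d : nat) (Ks : seq 'I_d) : nat := size (permutations Ks).

Definition cj (a d t : nat) (Q K : 'M[R]_(a, d)) (V : 'M[R]_(1, d))
  (j : 'I_t) (Ks : seq 'I_d) : R :=
  (@phiW a d t Q K V 0 j)@_(monoK j Ks).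

Definition yj (a d t : nat) (Q K : 'M[R]_(a, d)) (V : 'M[R]_(1, d))
  (j : 'I_t) (Ks : seq 'I_d) : R :=
  cj Q K V j Ks / (nPerm Ks)%:R.

Definition Tten (a d t : nat) (Q K : 'M[R]_(a, d)) (V : 'M[R]_(1, d))
  (j : 'I_t) (k1 k2 k3 : 'I_d) : R :=
  yj Q K V j [:: k1; k2; k3].

Definition fT (a d t : nat) (Q K : 'M[R]_(a, d)) (V : 'M[R]_(1, d))
  (j : 'I_t) : {mpoly R[d]} :=
  \sum_(k1 < d) \sum_(k2 < d) \sum_(k3 < d)
     Tten Q K V j k1 k2 k3 *: ('X_k1 * 'X_k2 * 'X_k3).

Definition Nmat (a d t : nat) (Q K : 'M[R]_(a, d)) (V : 'M[R]_(1, d))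
  (j : 'I_t) : 'M[R]_d :=
  \matrix_(k < d, k3 < d) Tten Q K V j k k k3.

Definition quadform (d : nat) (A : 'M[R]_d) : {mpoly R[d]} :=
  \sum_(p < d) \sum_(q < d) A p q *: ('X_p * 'X_q).
Definition linform (d : nat) (V : 'M[R]_(1, d)) : {mpoly R[d]} :=
  \sum_(k < d) V 0 k *: 'X_k.

Definition Mono3 (d : nat) := {m : 'X_{1..d < 4} | mdeg m == 3%N}.

(* basis of sl_d: E_uv (u <> v) and H_u = E_uu - E_dd (u < d, i.e. u not last) *)
Definition LieIdx (d : nat) :=
  ({p : 'I_d * 'I_d | p.1 != p.2} + {u : 'I_d | ((val u).+1 < d)%N})%type.

Definition Eact (d : nat) (u v : 'I_d) (f : {mpoly R[d]}) : {mpoly R[d]} :=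
  'X_u * f^`M(v).

(* action of a basis element of sl_d on a cubic; the last index d is the
   unique w : 'I_d with val w = d - 1 *)
Definition lieAct (d : nat) (b : LieIdx d) (f : {mpoly R[d]}) : {mpoly R[d]} :=
  match b with
  | inl p => Eact (val p).1 (val p).2 f
  | inr u => Eact (val u) (val u) f
             - \sum_(w : 'I_d | val w == d.-1) Eact w w f
  end.

Definition MLie (d : nat) (f : {mpoly R[d]})
  : 'M[R]_(#|{: Mono3 d}|, #|{: LieIdx d}|) :=
  \matrix_(i, b) (lieAct (enum_val b) f)@_(val (val (enum_val i)) : 'X_{1..d}).

End Attention.

(* Main.v *)
Require Import Defs.
From HB Require Import structures.
From mathcomp Require Import all_boot all_order all_algebra.
From mathcomp Require Import mpoly.
From mathcomp Require Import ring lra zify.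
From Stdlib Require Import Classical.
Set Implicit Arguments. Unset Strict Implicit. Unset Printing Implicit Defensive.
Import Order.TTheory GRing.Theory Num.Theory.
Local Open Scope ring_scope.

Lemma mxvec_index_inj (m n : nat) (i1 i2 : 'I_m) (j1 j2 : 'I_n) :
  (mxvec_index i1 j1 == mxvec_index i2 j2) = (i1 == i2) && (j1 == j2).
Proof.
apply/eqP/andP => [E|[/eqP-> /eqP->]] //.
move: E; rewrite /mxvec_index => /cast_ord_inj /enum_rank_inj [-> ->]; by [].
Qed.

Lemma perm_idx (d t : nat) (j n : 'I_t) (k p q a1 a2 a3 : 'I_d) :
  perm_eq [:: mxvec_index k n; mxvec_index p n; mxvec_index q j]
          [:: mxvec_index a1 j; mxvec_index a2 j; mxvec_index a3 j]
  = (n == j) && perm_eq [:: k; p; q] [:: a1; a2; a3].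
Proof.
have [->|nj] := eqVneq n j.
  have inj : injective (fun u : 'I_d => mxvec_index u j).
    by move=> u w /eqP; rewrite mxvec_index_inj eqxx andbT => /eqP.
  rewrite /=; apply/idP/idP => [H|H].
    by apply: (perm_map_inj inj); exact: H.
  exact: (perm_map (fun u : 'I_d => mxvec_index u j) H).
apply/negbTE/negP => /perm_mem/(_ (mxvec_index k n)).
by rewrite !inE eqxx /= !mxvec_index_inj (negbTE nj) !andbF.
Qed.

Lemma sumU_count (N : nat) (s : seq 'I_N) (x : 'I_N) :
  (\big[+%MM/0%MM]_(i <- s) U_(i))%MM x = count_mem x s.
Proof.
rewrite mnm_sumE; elim: s => [|y s IH]; first by rewrite big_nil.
by rewrite big_cons IH mnm1E /= eq_sym.
Qed.

Lemma sumU_eq (N : nat) (s1 s2 : seq 'I_N) :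
  ((\big[+%MM/0%MM]_(i <- s1) U_(i))%MM == (\big[+%MM/0%MM]_(i <- s2) U_(i))%MM)
  = perm_eq s1 s2.
Proof.
apply/eqP/idP => [E|P]; last by apply: perm_big.
by apply/allP => x _; apply/eqP; rewrite -!sumU_count E.
Qed.

Lemma mcoeff_sum (n : nat) (R : ringType) (I : Type) (r : seq I) (P : pred I)
  (F : I -> {mpoly R[n]}) (m : 'X_{1..n}) :
  (\sum_(i <- r | P i) F i)@_m = \sum_(i <- r | P i) (F i)@_m.
Proof. exact: (big_morph _ (mcoeffD m) (mcoeff0 _ m)). Qed.

Lemma sum_pair (R : nmodType) (I J : finType) (G : I * J -> R) :
  \sum_r G r = \sum_i \sum_j G (i, j).
Proof. by rewrite pair_bigA; apply: eq_bigr => -[]. Qed.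

Definition tri (d : nat) (q : 'I_d * ('I_d * 'I_d)) : seq 'I_d := [:: q.1; q.2.1; q.2.2].

Lemma card_tri (d : nat) (s : seq 'I_d) : size s = 3%N ->
  #|[pred q | perm_eq (tri q) s]| = size (permutations s).
Proof.
move=> s3.
set L := [seq tri q | q <- enum [pred q | perm_eq (tri q) s]].
have triI : injective (@tri d).
  by move=> [x [y z]] [x' [y' z']] [-> -> ->].
have uL : uniq L by rewrite map_inj_uniq ?enum_uniq.
have eL : L =i permutations s.
  move=> u; rewrite mem_permutations; apply/mapP/idP => [[q]|pu].
    by rewrite mem_enum inE => H ->.
  have su : size u = 3%N by rewrite (perm_size pu).
  case: u su pu => [|x [|y [|z [|w u]]]] //= _ pu.
  by exists (x, (y, z)); rewrite // mem_enum inE.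
rewrite cardE -(size_map (@tri d)).
exact: perm_size (uniq_perm uL (permutations_uniq s) eL).
Qed.

Lemma nPermE (R : ringType) (d : nat) (a1 a2 a3 : 'I_d) :
  (nPerm [:: a1; a2; a3])%:R =
  \sum_x \sum_y \sum_z (perm_eq [:: x; y; z] [:: a1; a2; a3])%:R :> R.
Proof.
under eq_bigr => x _ do rewrite pair_bigA /=.
rewrite pair_bigA /= -natr_sum.
rewrite /nPerm -(@card_tri d) //; congr (_%:R).
rewrite -sum1_card big_mkcond /=; apply: eq_bigr => q _.
by rewrite inE /tri; case: ifP.
Qed.
Definition Gm (R : ringType) (d : nat) (q : 'I_d * ('I_d * 'I_d)) : {mpoly R[d]} :=
  'X_q.1 * 'X_q.2.1 * 'X_q.2.2.

Lemma GmE (R : ringType) (d : nat) (q : 'I_d * ('I_d * 'I_d)) :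
  Gm R q = 'X_[(\big[+%MM/0%MM]_(i <- tri q) U_(i))%MM].
Proof. by rewrite /Gm /tri !big_cons big_nil addm0 !mpolyXD mulrA. Qed.

Lemma Gm_perm (R : ringType) (d : nat) (q r : 'I_d * ('I_d * 'I_d)) :
  perm_eq (tri r) (tri q) -> Gm R q = Gm R r.
Proof. by move=> P; rewrite !GmE (perm_big _ P). Qed.

Lemma sym_sum (R : realFieldType) (d : nat) (F : 'I_d * ('I_d * 'I_d) -> R) :
  \sum_q ((\sum_r F r * (perm_eq (tri r) (tri q))%:R) /
          (\sum_r (perm_eq (tri r) (tri q))%:R)) *: Gm R q
  = \sum_r F r *: Gm R r.
Proof.
pose n := fun q : 'I_d * ('I_d * 'I_d) => \sum_r (perm_eq (tri r) (tri q))%:R : R.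
rewrite -/(n _).
have nP : forall q r, perm_eq (tri r) (tri q) -> n q = n r.
  move=> q r P; apply: eq_bigr => r' _; congr (_%:R).
  by move/permPr: P => ->.
have n0 : forall r, n r != 0.
  move=> r; rewrite /n -natr_sum pnatr_eq0 -lt0n.
  by rewrite (bigD1 r) //= perm_refl.
transitivity (\sum_q \sum_r (F r / n r * (perm_eq (tri r) (tri q))%:R) *: Gm R r); last first.
  rewrite exchange_big /=; apply: eq_bigr => r _.
  rewrite -scaler_suml -mulr_sumr; congr (_ *: _).
  rewrite -[RHS]mulr1 -mulrA; congr (_ * _).
  have -> : \sum_q (perm_eq (tri r) (tri q))%:R = n r :> R.
    by apply: eq_bigr => q _; rewrite perm_sym.
  by rewrite mulVf.
apply: eq_bigr => q _.
rewrite mulr_suml scaler_suml; apply: eq_bigr => r _.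
case P: (perm_eq (tri r) (tri q)); last by rewrite !mulr0 !mul0r !scale0r.
by rewrite -/(n q) (nP _ _ P) (Gm_perm _ P) !mulr1.
Qed.
Lemma perm3 (T : eqType) (x y z k c : T) : k != c ->
  perm_eq [:: x; y; z] [:: k; k; c] =
  [|| [&& x == k, y == k & z == c], [&& x == k, y == c & z == k] | [&& x == c, y == k & z == k]].
Proof.
move=> kc; have ck : c != k by rewrite eq_sym.
have mem2 : forall w, w \in [:: k; k; c] -> (w == k) || (w == c).
  by move=> w; rewrite !inE orbA orbb.
apply/idP/idP => [P|].
  have M := perm_mem P.
  have /mem2 hx : x \in [:: k; k; c] by rewrite -M !inE eqxx.
  have /mem2 hy : y \in [:: k; k; c] by rewrite -M !inE eqxx orbT.
  have /mem2 hz : z \in [:: k; k; c] by rewrite -M !inE eqxx !orbT.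
  move: P; case/orP: hx => /eqP->; case/orP: hy => /eqP->; case/orP: hz => /eqP->;
    by rewrite /perm_eq /= !eqxx ?(negbTE kc) ?(negbTE ck).
case/or3P => /and3P [/eqP-> /eqP-> /eqP->];
  by rewrite /perm_eq /= !eqxx ?(negbTE kc) ?(negbTE ck).
Qed.

Lemma perm3' (T : eqType) (x y z k : T) :
  perm_eq [:: x; y; z] [:: k; k; k] = [&& x == k, y == k & z == k].
Proof.
apply/idP/idP => [P|/and3P [/eqP-> /eqP-> /eqP->] //].
have M := perm_mem P.
have : x \in [:: k; k; k] by rewrite -M !inE eqxx.
have : y \in [:: k; k; k] by rewrite -M !inE eqxx orbT.
have : z \in [:: k; k; k] by rewrite -M !inE eqxx !orbT.
by rewrite !inE !orbb => -> -> ->.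
Qed.

Lemma ind3 (R : ringType) (T : eqType) (r q1 q2 q3 : T) :
  q1 != q2 -> q1 != q3 -> q2 != q3 ->
  ([|| r == q1, r == q2 | r == q3])%:R = (r == q1)%:R + (r == q2)%:R + (r == q3)%:R :> R.
Proof.
move=> h12 h13 h23.
case: (eqVneq r q1) => [->|n1]; first by rewrite (negbTE h12) (negbTE h13) addr0 addr0.
case: (eqVneq r q2) => [->|n2]; first by rewrite (negbTE h23) /= add0r addr0.
by case: (eqVneq r q3) => _ /=; rewrite ?add0r ?addr0.
Qed.

Lemma sum_ind1 (R : ringType) (T : finType) (G : T -> R) (q : T) :
  \sum_r G r * (r == q)%:R = G q.
Proof.
rewrite (bigD1 q) //= eqxx mulr1 big1 ?addr0 // => r /negbTE ->.
by rewrite mulr0.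
Qed.

Lemma mxrank_mxsub (R : fieldType) m n m' n' (r : 'I_m' -> 'I_m) (c : 'I_n' -> 'I_n)
  (M : 'M[R]_(m, n)) : (\rank (mxsub r c M) <= \rank M)%N.
Proof.
have -> : mxsub r c M = rowsub r (colsub c M) by apply/matrixP => i k; rewrite !mxE.
apply: leq_trans (mxrankS (rowsub_sub _ _)) _.
have -> : colsub c M = (rowsub c M^T)^T by apply/matrixP => i k; rewrite !mxE.
by rewrite mxrank_tr -[leqRHS]mxrank_tr mxrankS // rowsub_sub.
Qed.

Lemma det_rank0 (R : fieldType) n (M : 'M[R]_n) : (\rank M < n)%N -> \det M = 0.
Proof.
move=> H; apply/eqP; apply: contraLR H => H.
by rewrite -leqNgt mxrank_unit // unitmxE unitfE.
Qed.

Lemma Nform (R : fieldType) (d : nat) (B N : 'M[R]_d) (v : 'rV[R]_d) :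
  (forall k c, N k c = (v 0 k * (B k c + B c k) + v 0 c * B k k) / 3%:R) ->
  N = (3%:R)^-1 *: (diag_mx v *m (B + B^T) + (\col_k B k k) *m v).
Proof.
move=> H; apply/matrixP => k c; rewrite H !mxE big_ord1 !mxE.
rewrite (bigD1 k) //= big1 ?addr0; last first.
  by move=> i /negbTE ki; rewrite !mxE eq_sym ki mulr0n mul0r.
rewrite !mxE eqxx mulr1n.
rewrite mulrC; congr (_ * _).
by rewrite [B k k * _]mulrC.
Qed.

Section S.
Variables (R : realFieldType) (a d t : nat) (Q K : 'M[R]_(a,d)) (V : 'M[R]_(1,d)) (j : 'I_t).
Local Notation A := (Amat Q K).
Local Notation idx := (@mxvec_index d t).

Lemma phiW_sum : phiW t Q K V 0 j = \sum_n \sum_k \sum_q \sum_p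
   (V 0 k * A p q) *: 'X_[(\big[+%MM/0%MM]_(i <- [:: idx k n; idx p n; idx q j]) U_(i))%MM].
Proof.
rewrite /phiW !mxE; apply: eq_bigr => n _.
rewrite !mxE big_distrl /=; apply: eq_bigr => k _.
rewrite !mxE big_distrr /=; apply: eq_bigr => q _.
rewrite !mxE big_distrl /= big_distrr /=; apply: eq_bigr => p _.
rewrite !mxE !big_cons big_nil addm0 !mpolyXD /xvar -mul_mpolyC mpolyCM.
ring.
Qed.

Lemma cjE (a1 a2 a3 : 'I_d) : cj Q K V j [:: a1; a2; a3] =
  \sum_k \sum_q \sum_p V 0 k * A p q * (perm_eq [:: k; p; q] [:: a1; a2; a3])%:R.
Proof.
rewrite /cj phiW_sum mcoeff_sum (bigD1 j) //= [X in _ + X]big1 ?addr0; last first.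
  move=> n nj. rewrite mcoeff_sum big1 // => k _; rewrite mcoeff_sum big1 // => q _.
  rewrite mcoeff_sum big1 // => p _; rewrite mcoeffZ mcoeffX /monoK.
  rewrite -(big_map (fun u => idx u j) xpredT (fun i => U_(i)%MM)) sumU_eq /=.
  by rewrite perm_idx (negbTE nj) mulr0.
rewrite mcoeff_sum; apply: eq_bigr => k _; rewrite mcoeff_sum; apply: eq_bigr => q _.
rewrite mcoeff_sum; apply: eq_bigr => p _; rewrite mcoeffZ mcoeffX /monoK.
rewrite -(big_map (fun u => idx u j) xpredT (fun i => U_(i)%MM)) sumU_eq /=.
by rewrite perm_idx eqxx.
Qed.

Definition Fv (r : 'I_d * ('I_d * 'I_d)) : R := V 0 r.1 * A r.2.1 r.2.2.

Lemma TtenE (q : 'I_d * ('I_d * 'I_d)) : Tten Q K V j q.1 q.2.1 q.2.2 =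
  (\sum_r Fv r * (perm_eq (tri r) (tri q))%:R) /
  (\sum_r (perm_eq (tri r) (tri q))%:R).
Proof.
rewrite /Tten /yj cjE nPermE; congr (_ / _).
  under eq_bigr => k _ do rewrite exchange_big pair_bigA /=.
  by rewrite pair_bigA.
under eq_bigr => k _ do rewrite pair_bigA /=.
by rewrite pair_bigA.
Qed.

Lemma fTE : fT Q K V j = quadform A * linform V.
Proof.
rewrite /fT.
under eq_bigr => k _ do rewrite pair_bigA /=.
rewrite pair_bigA /=.
rewrite (eq_bigr (fun q => Tten Q K V j q.1 q.2.1 q.2.2 *: Gm R q)) //.
under eq_bigr => q _ do rewrite TtenE.
rewrite sym_sum sum_pair.
under eq_bigr => k _ do rewrite sum_pair.
rewrite exchange_big /=.
under eq_bigr => p _ do rewrite exchange_big /=.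
rewrite /quadform /linform mulr_suml; apply: eq_bigr => p _.
rewrite mulr_suml; apply: eq_bigr => q _.
rewrite mulr_sumr; apply: eq_bigr => k _.
by rewrite /Fv /Gm /= -!scalerAl -!scalerAr scalerA mulrC [_ * 'X_k]mulrC !mulrA.
Qed.


Lemma Nent (k c : 'I_d) : Nmat Q K V j k c =
  (V 0 k * (A k c + A c k) + V 0 c * A k k) / 3%:R.
Proof.
rewrite /Nmat mxE; have := TtenE (k, (k, c)); rewrite /= => ->.
case: (eqVneq k c) => [<-|kc].
  have E : forall r : 'I_d * ('I_d * 'I_d),
      perm_eq (tri r) [:: k; k; k] = (r == (k, (k, k))).
    by move=> [x [y z]]; rewrite /tri /= perm3' !xpair_eqE.
  under eq_bigr => r _ do rewrite E.
  under [X in _ / X]eq_bigr => r _ do rewrite E -[_%:R]mul1r.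
  rewrite !sum_ind1 divr1 /Fv /=.
  by field.
have E : forall r : 'I_d * ('I_d * 'I_d),
    perm_eq (tri r) [:: k; k; c] =
    [|| r == (k, (k, c)), r == (k, (c, k)) | r == (c, (k, k))].
  by move=> [x [y z]]; rewrite /tri /= perm3 // !xpair_eqE.
have ck : c != k by rewrite eq_sym.
have h12 : (k, (k, c)) != (k, (c, k)) by rewrite !xpair_eqE eqxx (negbTE kc).
have h13 : (k, (k, c)) != (c, (k, k)) by rewrite !xpair_eqE (negbTE kc).
have h23 : (k, (c, k)) != (c, (k, k)) by rewrite !xpair_eqE (negbTE kc).
under eq_bigr => r _ do rewrite E ind3 // !mulrDr.
under [X in _ / X]eq_bigr => r _ do rewrite E ind3 // -[(_ == (k, (k, c)))%:R]mul1r
   -[(_ == (k, (c, k)))%:R]mul1r -[(_ == (c, (k, k)))%:R]mul1r.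
rewrite !big_split /= !sum_ind1 /Fv /=.
congr (_ / _); first by ring.
by ring.
Qed.

Lemma NmatE : Nmat Q K V j =
  (3%:R)^-1 *: (diag_mx V *m (A + A^T) + (\col_k A k k) *m V).
Proof. by apply: Nform => k c; rewrite Nent. Qed.

End S.

Lemma ker_exists (R : fieldType) m d (B : 'M[R]_(m, d)) : (m < d)%N ->
  exists y : 'cV[R]_d, y != 0 /\ B *m y = 0.
Proof.
move=> md.
have : kermx B^T != 0.
  rewrite -mxrank_eq0 mxrank_ker mxrank_tr subn_eq0 -ltnNge.
  exact: leq_ltn_trans (rank_leq_row B) md.
move=> nz.
have /existsP [i ni] : [exists i, row i (kermx B^T) != 0].
  apply: contraNT nz => /existsPn H; apply/eqP/row_matrixP => i; rewrite row0.
  by apply/eqP; move: (H i); rewrite negbK.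
exists (row i (kermx B^T))^T; split; first by rewrite trmx_eq0.
apply: trmx_inj; rewrite trmx_mul trmxK trmx0.
by apply/sub_kermxP; rewrite row_sub.
Qed.

Lemma normsq_neq0 (R : realFieldType) d (y : 'cV[R]_d) : y != 0 -> (y^T *m y) 0 0 != 0.
Proof.
move=> ny; rewrite mxE; apply: contra ny => /eqP E.
apply/eqP/matrixP => i k; rewrite (ord1 k) mxE.
have P0 : forall j, xpredT j -> 0 <= y^T 0 j * y j 0.
  by move=> j _; rewrite mxE -expr2 sqr_ge0.
have := @psumr_eq0P _ _ xpredT _ P0 E i isT.
by rewrite mxE => /eqP; rewrite mulf_eq0 orbb => /eqP.
Qed.

Lemma stab_exists (R : realFieldType) d (A : 'M[R]_d) (V : 'rV[R]_d) : (3 <= d)%N ->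
  exists M : 'M[R]_d, [/\ M != 0, M *m V^T = 0, \tr M = 0 &
     (M *m (A + A^T))^T = - (M *m (A + A^T))].
Proof.
move=> d3; set S := A + A^T.
have St : S^T = S by rewrite /S linearD /= trmxK addrC.
have [[x [Vx Sx]]|H] := classic (exists x : 'cV[R]_d, V *m x = 0 /\ S *m x != 0).
  have [y [ny Ey]] := @ker_exists R (1 + 1)%N d (col_mx V x^T) (leq_trans (isT : (2 < 3)%N) d3).
  move: Ey; rewrite mul_col_mx => /eqP; rewrite -col_mx0 => /eqP /eq_col_mx [Vy xy].
  pose Km := x *m y^T - y *m x^T.
  have Kt : Km^T = - Km by rewrite /Km linearB /= !trmx_mul !trmxK opprB.
  have yV : y^T *m V^T = 0 by rewrite -trmx_mul Vy trmx0.
  have xV : x^T *m V^T = 0 by rewrite -trmx_mul Vx trmx0.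
  exists (S *m Km); split.
  - apply: contraNneq Sx => E.
    have := congr1 (mulmx^~ y) E; rewrite mul0mx /Km mulmxBr mulmxBl -!mulmxA xy !mulmx0 subr0.
    rewrite [y^T *m y]mx11_scalar mul_mx_scalar -scalemxAr => /eqP.
    by rewrite scalemx_eq0 (negbTE (normsq_neq0 ny)).
  - by rewrite /Km -mulmxA mulmxBl -!mulmxA yV xV !mulmx0 subr0 mulmx0.
  - have h : \tr (S *m Km) = - \tr (S *m Km).
      by rewrite -[in LHS]mxtrace_tr trmx_mul Kt St mulNmx raddfN /= mxtrace_mulC.
    lra.
  - by rewrite !trmx_mul St Kt mulNmx mulmxN mulmxA.
have H' : forall x : 'cV[R]_d, V *m x = 0 -> S *m x = 0.
  move=> x Vx; apply/eqP; apply: contraT => Sx; case: H; by exists x.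
have [y [ny Vy]] := @ker_exists R 1 d V (leq_trans (isT : (1 < 3)%N) d3).
have [z [nz yz]] := @ker_exists R 1 d y^T (leq_trans (isT : (1 < 3)%N) d3).
have yV : y^T *m V^T = 0 by rewrite -trmx_mul Vy trmx0.
have yS : y^T *m S = 0 by rewrite -St -trmx_mul H' // trmx0.
exists (z *m y^T); split.
- apply: contraNneq nz => E.
  have := congr1 (mulmx^~ y) E; rewrite mul0mx -mulmxA.
  rewrite [y^T *m y]mx11_scalar mul_mx_scalar => /eqP.
  by rewrite scalemx_eq0 (negbTE (normsq_neq0 ny)).
- by rewrite -mulmxA yV mulmx0.
- by rewrite mxtrace_mulC yz mxtrace0.
- by rewrite -mulmxA yS mulmx0 trmx0 oppr0.
Qed.

Lemma sum_ind1Z (R : ringType) (W : lmodType R) (T : finType) (G : T -> R) (q : T) (x : W) :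
  \sum_r G r *: ((r == q)%:R *: x) = G q *: x.
Proof.
rewrite (eq_bigr (fun r => (G r * (r == q)%:R) *: x)) => [|r _]; last by rewrite scalerA.
by rewrite -scaler_suml sum_ind1.
Qed.

Section D.
Variables (R : realFieldType) (d : nat).
Implicit Types (A M B : 'M[R]_d) (V : 'rV[R]_d).

Lemma mderiv_sum (I : Type) (r : seq I) (P : pred I) (F : I -> {mpoly R[d]}) v :
  (\sum_(i <- r | P i) F i)^`M(v) = \sum_(i <- r | P i) (F i)^`M(v).
Proof. exact: linear_sum. Qed.

Lemma mderivX1 (k v : 'I_d) : ('X_k : {mpoly R[d]})^`M(v) = ((k == v)%:R)%:MP.
Proof.
rewrite mderivX mnm1E; case: eqP => [->|_]; last by rewrite scale0r.
have -> : (U_(v) - U_(v))%MM = 0%MM by apply/mnmP => i; rewrite mnmBE mnm0E subnn.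
by rewrite mpolyX0 scale1r.
Qed.

Lemma dlin V v : (linform V)^`M(v) = (V 0 v)%:MP.
Proof.
rewrite /linform mderiv_sum.
under eq_bigr => k _ do rewrite mderivZ mderivX1 -mul_mpolyC -mpolyCM.
by rewrite -rmorph_sum sum_ind1.
Qed.

Lemma dquad A v : (quadform A)^`M(v) = \sum_w (A v w + A w v) *: 'X_w.
Proof.
rewrite /quadform mderiv_sum.
under eq_bigr => p _ do rewrite mderiv_sum.
under eq_bigr => p _ do under eq_bigr => q _ do
  rewrite mderivZ mderivM !mderivX1 !mul_mpolyC mulrC mul_mpolyC scalerDr.
under eq_bigr => p _ do rewrite big_split /=.
rewrite big_split /= exchange_big /=.
under [X in X + _ = _]eq_bigr => q _ do rewrite sum_ind1Z.
under [X in _ + X = _]eq_bigr => p _ do rewrite sum_ind1Z.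
by rewrite -big_split /=; apply: eq_bigr => w _; rewrite scalerDl.
Qed.

Lemma skew0 B : B^T = - B -> \sum_u \sum_w B u w *: ('X_u * 'X_w : {mpoly R[d]}) = 0.
Proof.
move=> Bt; set s := \sum_u _.
have : s = - s.
  rewrite {1}/s exchange_big /= /s -sumrN; apply: eq_bigr => u _.
  rewrite -sumrN; apply: eq_bigr => w _.
  have := congr1 (fun X : 'M[R]_d => X w u) Bt; rewrite !mxE => ->.
  by rewrite scaleNr opprK mulrC.
move/eqP; rewrite -subr_eq0 opprK -mulr2n -scaler_nat scaler_eq0 pnatr_eq0 /=.
by move/eqP.
Qed.

Lemma Dzero A V M : M *m V^T = 0 -> (M *m (A + A^T))^T = - (M *m (A + A^T)) ->
  \sum_u \sum_v M u v *: Eact u v (quadform A * linform V) = 0.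
Proof.
move=> MV Sk; rewrite /Eact.
under eq_bigr => u _ do under eq_bigr => v _ do
  rewrite mderivM dlin dquad mulrDr scalerDr.
under eq_bigr => u _ do rewrite big_split /=.
rewrite big_split /= [X in _ + X]big1 ?addr0; last first.
  move=> u _.
  rewrite (eq_bigr (fun v => (M u v * V 0 v) *: (quadform A * 'X_u))); last first.
    move=> v _; rewrite -!mul_mpolyC mpolyCM; ring.
  rewrite -scaler_suml.
  have -> : \sum_v M u v * V 0 v = (M *m V^T) u 0.
    by rewrite mxE; apply: eq_bigr => v _; rewrite mxE.
  by rewrite MV mxE scale0r.
transitivity ((\sum_u \sum_w (M *m (A + A^T)) u w *: ('X_u * 'X_w)) * linform V); last by rewrite skew0 // mul0r.
rewrite mulr_suml; apply: eq_bigr => u _.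
rewrite mulr_suml.
under [RHS]eq_bigr => w _ do rewrite mxE scaler_suml mulr_suml.
rewrite exchange_big /=; apply: eq_bigr => v _.
rewrite big_distrl big_distrr /= scaler_sumr; apply: eq_bigr => w _.
rewrite !mxE -!mul_mpolyC !mpolyCM; ring.
Qed.

End D.

Lemma big_sig_gen (W : nmodType) (I : finType) (P : pred I) (F : I -> W) :
  \sum_(x : {i | P i}) F (val x) = \sum_(i | P i) F i.
Proof.
rewrite [RHS](reindex_omap (val : {i | P i} -> I) insub); last first.
  by move=> i Pi; rewrite insubT.
by apply: eq_bigl=> -[i Pi] /=; rewrite Pi insubT /= eqxx.
Qed.

Definition coefL (R : ringType) d (M : 'M[R]_d) (b : LieIdx d) : R :=
  match b with inl p => M (val p).1 (val p).2 | inr u => M (val u) (val u) end.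

Section L.
Variables (R : realFieldType) (d : nat).

Lemma lie_comb (M : 'M[R]_d) (f : {mpoly R[d]}) : (0 < d)%N -> \tr M = 0 ->
  \sum_(b : LieIdx d) coefL M b *: lieAct b f = \sum_u \sum_v M u v *: Eact u v f.
Proof.
move=> d0 trM; have ld : (d.-1 < d)%N by rewrite ltn_predL.
pose l := Ordinal ld.
have El : forall g : 'I_d -> {mpoly R[d]}, \sum_(w : 'I_d | val w == d.-1) g w = g l.
  by move=> g; rewrite (big_pred1 l) // => w; rewrite -val_eqE.
rewrite big_sumType /=.
rewrite (@big_sig_gen _ _ _ (fun p : 'I_d * 'I_d => M p.1 p.2 *: Eact p.1 p.2 f)).
rewrite (@big_sig_gen _ _ _ (fun u : 'I_d => M u u *: (Eact u u f - \sum_(w : 'I_d | val w == d.-1) Eact w w f))).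
have Cl : forall i : 'I_d, (i.+1 < d)%N = (i != l).
  move=> i; rewrite -val_eqE /=; have := ltn_ord i.
  by move=> ?; apply/idP/idP => H; lia.
under [X in _ + X = _]eq_bigl => i do rewrite Cl.
rewrite El.
under [X in _ + X = _]eq_bigr => i _ do rewrite scalerBr.
rewrite sumrB -scaler_suml.
have Tl : \sum_(i | i != l) M i i = - M l l.
  by have := trM; rewrite /mxtrace (bigD1 l) //= => /eqP; rewrite addrC addr_eq0 => /eqP.
rewrite Tl scaleNr opprK.
rewrite [RHS](eq_bigr (fun u => M u u *: Eact u u f + \sum_(v | u != v) M u v *: Eact u v f)); last first.
  by move=> u _; rewrite [LHS](bigD1 u) //=; congr (_ + _); apply: eq_bigl => v; rewrite eq_sym.
rewrite big_split /= [X in _ = X + _](bigD1 l) //= [X in _ = _ + X]pair_big_dep /=.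
ring.
Qed.

Lemma MLie_rank_lt (f : {mpoly R[d]}) (M : 'M[R]_d) : (0 < d)%N -> M != 0 -> \tr M = 0 ->
  \sum_u \sum_v M u v *: Eact u v f = 0 -> (\rank (MLie f) < #|{: LieIdx d}|)%N.
Proof.
move=> d0 Mn trM D0.
pose w : 'cV[R]_#|{: LieIdx d}| := \col_b coefL M (enum_val b).
have Mw : MLie f *m w = 0.
  apply/matrixP => i k; rewrite !mxE.
  transitivity ((\sum_(b < #|{: LieIdx d}|) coefL M (enum_val b) *: lieAct (enum_val b) f)@_(val (val (enum_val i)))).
    by rewrite mcoeff_sum; apply: eq_bigr => b _; rewrite !mxE mcoeffZ mulrC.
  rewrite -(big_enum_val (A := {: LieIdx d}) (fun e => coefL M e *: lieAct e f)) /=.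
  by rewrite (eq_bigl (fun _ => true)) // lie_comb // D0 mcoeff0.
have wn : w != 0.
  apply: contraNneq Mn => w0.
  have cz : forall e, coefL M e = 0.
    move=> e; have := congr1 (fun X : 'cV[R]_#|{: LieIdx d}| => X (enum_rank e) 0) w0.
    by rewrite !mxE enum_rankK.
  have ld : (d.-1 < d)%N by rewrite ltn_predL.
  pose l := Ordinal ld.
  have Cl : forall i : 'I_d, (i.+1 < d)%N = (i != l).
    move=> i; rewrite -val_eqE /=; have := ltn_ord i.
    by move=> ?; apply/idP/idP => H; lia.
  have diag : forall u : 'I_d, u != l -> M u u = 0.
    move=> u ul; have H : ((val u).+1 < d)%N by rewrite Cl.
    exact: (cz (inr (exist _ u H))).
  apply/eqP/matrixP => u v; rewrite mxE.
  case: (eqVneq u v) => [<-|uv]; last exact: (cz (inl (exist _ (u, v) uv))).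
  case: (eqVneq u l) => [->|ul]; last exact: diag.
  have := trM; rewrite /mxtrace (bigD1 l) //= big1 ?addr0 //.
have := mulmx0_rank_max Mw.
have : (0 < \rank w)%N by rewrite lt0n mxrank_eq0.
by move=> H1 H2; apply: leq_trans H2; rewrite -addn1 leq_add2l.
Qed.
End L.
Section Card.
Local Open Scope nat_scope.

Lemma card_Lie d : 0 < d -> #|{: LieIdx d}| = (d ^ 2).-1.
Proof.
move=> d0; rewrite card_sum !card_sig.
have ld : d.-1 < d by rewrite ltn_predL.
have -> : #|[pred u : 'I_d | (val u).+1 < d]| = d.-1.
  have C1 : #|predC1 (Ordinal ld)| = d.-1 by rewrite cardC1 card_ord.
  rewrite -C1; apply: eq_card => i.
  rewrite !inE -val_eqE /=; have := ltn_ord i.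
  by move=> ?; apply/idP/idP => H; lia.
have Hd : #|[pred p : 'I_d * 'I_d | p.1 == p.2]| = d.
  rewrite -[RHS](card_ord d) -(card_image (f := fun u : 'I_d => (u, u))); last by move=> x y [].
  apply: eq_card => -[x y]; rewrite !inE /=; apply/eqP/imageP => [->|[z _ [-> ->]]] //.
  by exists y.
have := cardC [pred p : 'I_d * 'I_d | p.1 == p.2]; rewrite card_prod card_ord Hd.
have -> : #|[predC [pred p : 'I_d * 'I_d | p.1 == p.2]]| = #|[pred p : 'I_d * 'I_d | p.1 != p.2]|.
  by apply: eq_card => p; rewrite !inE.
move=> E; rewrite expnS expn1; lia.
Qed.

End Card.

Theorem mainTheorem7 (R : realFieldType) (a d t : nat)
  (Q K : 'M[R]_(a, d)) (V : 'M[R]_(1, d)) (j : 'I_t) :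
  (3 <= d)%N ->
  let A := Amat Q K in
  let N := Nmat Q K V j in
  let f := fT Q K V j in
  (* (1) *)
  ((\rank N <= 2 * \rank A + 1)%N /\
   ((2 * \rank A + 1 < d)%N ->
    forall (r c : 'I_(2 * \rank A + 2) -> 'I_d),
      injective r -> injective c -> \det (mxsub r c N) = 0)) /\
  (* (2) *)
  (f = quadform A * linform V /\
   (\rank (MLie f) < (d ^ 2).-1)%N /\
   (forall (r : 'I_((d ^ 2).-1) -> 'I_#|{: Mono3 d}|)
           (c : 'I_((d ^ 2).-1) -> 'I_#|{: LieIdx d}|),
      injective r -> injective c -> \det (mxsub r c (MLie f)) = 0)).
Proof.
move=> d3 A N f.
have rN : (\rank N <= 2 * \rank A + 1)%N.
  rewrite /N NmatE.
  apply: leq_trans (mxrank_scale _ _) _.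
  apply: leq_trans (mxrank_add _ _) _.
  apply: leq_add.
    apply: leq_trans (mxrankM_maxr _ _) _.
    apply: leq_trans (mxrank_add _ _) _.
    by rewrite mxrank_tr addnn -mul2n.
  apply: leq_trans (mxrankM_maxr _ _) _.
  exact: rank_leq_row.
split; first split => //.
  move=> _ r c _ _; apply: det_rank0.
  apply: leq_ltn_trans (mxrank_mxsub _ _ _) _.
  by apply: leq_ltn_trans rN _; rewrite ltn_add2l.
have fE : f = quadform A * linform V by rewrite /f fTE.
have rk : (\rank (MLie f) < (d ^ 2).-1)%N.
  have d0 : (0 < d)%N by apply: leq_trans d3.
  have [M [Mn MV trM Sk]] := stab_exists A V d3.
  rewrite -card_Lie //; apply: (MLie_rank_lt d0 Mn trM).
  by rewrite fE; apply: Dzero.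
split => //; split => // r c _ _; apply: det_rank0.
exact: leq_ltn_trans (mxrank_mxsub _ _ _) rk.
Qed.
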